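(* Let $\mathbf x_1,\dots,\mathbf x_l\in\mathbb{R}^n$, $y_1,\dots,y_l\in\mathbb{R}$, let $\mathbf X\in\mathbb{R}^{l\times n}$ have $i$-th row $\mathbf x_i^T$ and $\mathbf y=(y_1,\dots,y_l)^T$. For $C>0$ consider the least absolute deviations problem $$\min_{\mathbf w}\tfrac12\|\mathbf w\|^2+C\sum_{i=1}^l|y_i-\mathbf w^T\mathbf x_i|$$ with optimal solution $\mathbf w^*(C)$, and its dual $\min_{\theta\in[-1,1]^l}\frac C2\|\mathbf X^T\theta\|^2-\langle\mathbf y,\theta\rangle$ with optimal solution $\theta^*(C)$. Let $0<C_1<\dots<C_{\mathcal K}$ and suppose $\theta^*(C_k)$ is known for some integer $1\le k<\mathcal K$. Then $[\theta^*(C_{k+1})]_i=-1$ (i.e., $i\in\mathcal R$) if $$\tfrac{C_{k+1}+C_k}{2}\langle\mathbf X^T\theta^*(C_k),\mathbf x_i\rangle-\tfrac{C_{k+1}-C_k}{2}\|\mathbf X^T\theta^*(C_k)\|\,\|\mathbf x_i\|>y_i,$$ and $[\theta^*(C_{k+1})]_i=1$ (i.e., $i\in\mathcal L$) if $$\tfrac{C_{k+1}+C_k}{2}\langle\mathbf X^T\theta^*(C_k),\mathbf x_i\rangle+\tfrac{C_{k+1}-C_k}{2}\|\mathbf X^T\theta^*(C_k)\|\,\|\mathbf x_i\|<y_i.$$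
   Context: Primal and dual solutions satisfy $\mathbf w^*(C)=C\mathbf X^T\theta^*(C)$. At parameter $C=C_{k+1}$: $\mathcal R=\{i:\langle\mathbf w^*(C),\mathbf x_i\rangle>y_i\}$ and $\mathcal L=\{i:\langle\mathbf w^*(C),\mathbf x_i\rangle<y_i\}$. *)

(* Defs.v *)
From HB Require Import structures.
From mathcomp Require Import all_boot all_order all_algebra.
Set Implicit Arguments. Unset Strict Implicit. Unset Printing Implicit Defensive.
Import Order.TTheory GRing.Theory Num.Theory.
Local Open Scope ring_scope.

Section LAD.
Variable R : rcfType.

Definition dotv (n : nat) (u v : 'cV[R]_n) : R := \sum_(j < n) u j 0 * v j 0.
Definition normv (n : nat) (u : 'cV[R]_n) : R := Num.sqrt (dotv u u).

Definition rowvec (l n : nat) (X : 'M[R]_(l, n)) (i : 'I_l) : 'cV[R]_n := (row i X)^T.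

Definition primal_obj (l n : nat) (X : 'M[R]_(l, n)) (y : 'cV[R]_l) (C : R)
  (w : 'cV[R]_n) : R :=
  2^-1 * normv w ^+ 2 + C * \sum_(i < l) `|y i 0 - dotv w (rowvec X i)|.

Definition primal_opt (l n : nat) (X : 'M[R]_(l, n)) (y : 'cV[R]_l) (C : R)
  (w : 'cV[R]_n) : Prop :=
  forall w', primal_obj X y C w <= primal_obj X y C w'.

Definition in_box (l : nat) (t : 'cV[R]_l) : Prop := forall i, -1 <= t i 0 <= 1.

Definition dual_obj (l n : nat) (X : 'M[R]_(l, n)) (y : 'cV[R]_l) (C : R)
  (t : 'cV[R]_l) : R :=
  C / 2 * normv (X^T *m t) ^+ 2 - dotv y t.

Definition dual_opt (l n : nat) (X : 'M[R]_(l, n)) (y : 'cV[R]_l) (C : R)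
  (t : 'cV[R]_l) : Prop :=
  in_box t /\ forall t', in_box t' -> dual_obj X y C t <= dual_obj X y C t'.

End LAD.

(* Main.v *)
Require Import Defs.
From HB Require Import structures.
From mathcomp Require Import all_boot all_order all_algebra.
From mathcomp Require Import ring lra.
Import Order.TTheory GRing.Theory Num.Theory.
Local Open Scope ring_scope.
Set Implicit Arguments. Unset Strict Implicit. Unset Printing Implicit Defensive.

Section V.
Variable R : rcfType.
Variable m : nat.
Implicit Types u v w : 'cV[R]_m.

Lemma dotvC u v : dotv u v = dotv v u.
Proof. by apply: eq_bigr => j _; rewrite mulrC. Qed.
Lemma dotvDl u v w : dotv (u + v) w = dotv u w + dotv v w.
Proof. by rewrite /dotv -big_split; apply: eq_bigr => j _; rewrite mxE mulrDl. Qed.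
Lemma dotvZl (a : R) u v : dotv (a *: u) v = a * dotv u v.
Proof. by rewrite /dotv mulr_sumr; apply: eq_bigr => j _; rewrite mxE mulrA. Qed.
Lemma dotvNl u v : dotv (- u) v = - dotv u v.
Proof. by rewrite -scaleN1r dotvZl mulN1r. Qed.
Lemma dotvDr u v w : dotv w (u + v) = dotv w u + dotv w v.
Proof. by rewrite dotvC dotvDl !(dotvC w). Qed.
Lemma dotvZr (a : R) u v : dotv v (a *: u) = a * dotv v u.
Proof. by rewrite dotvC dotvZl dotvC. Qed.
Lemma dotvNr u v : dotv v (- u) = - dotv v u.
Proof. by rewrite dotvC dotvNl dotvC. Qed.
Lemma dotv_ge0 u : 0 <= dotv u u.
Proof. by apply: sumr_ge0 => j _; rewrite -expr2 sqr_ge0. Qed.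
Lemma normv_sqr u : normv u ^+ 2 = dotv u u.
Proof. by rewrite /normv sqr_sqrtr // dotv_ge0. Qed.
Lemma dotv0 u v : dotv u u = 0 -> dotv u v = 0.
Proof.
move=> /eqP; rewrite /dotv psumr_eq0 => [/allP H|j _]; last by rewrite -expr2 sqr_ge0.
apply: big1 => j _.
have /implyP := H j (mem_index_enum j); move=> /(_ isT).
by rewrite mulf_eq0 orbb => /eqP ->; rewrite mul0r.
Qed.

Lemma CS u v : `|dotv u v| <= normv u * normv v.
Proof.
have key : dotv u v ^+ 2 <= dotv u u * dotv v v.
  have [h0|hne] := eqVneq (dotv v v) 0.
    by rewrite dotvC (dotv0 u h0) h0 mulr0 expr0n.
  have hp : 0 < dotv v v by rewrite lt0r hne dotv_ge0.
  have H := dotv_ge0 (u - (dotv u v / dotv v v) *: v).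
  rewrite !dotvDl !dotvDr !dotvNl !dotvNr !dotvZl !dotvZr (dotvC v u) in H.
  move: H; set P := dotv u u; set Q := dotv u v; set D := dotv v v => H.
  have E : P - Q / D * Q + (- (Q / D * Q) - - (Q / D * (Q / D * D)))
     = (P * D - Q ^+ 2) / D by field; rewrite /D hne.
  rewrite E pmulr_lge0 ?invr_gt0 // in H.
  by rewrite -subr_ge0.
rewrite /normv -sqrtrM ?dotv_ge0 // -(sqrtr_sqr (dotv u v)).
by rewrite ler_sqrt // mulr_ge0 // dotv_ge0.
Qed.
End V.

Lemma small (R : rcfType) (a b : R) : 0 <= b ->
  (forall s, 0 < s -> s <= 1 -> 0 <= s * a + s ^+ 2 * b) -> 0 <= a.
Proof.
move=> hb H; rewrite leNgt; apply/negP => ha.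
have hD : 0 < 2 * b + 1 - a by lra.
have hE : 0 < b + 1 - a by lra.
move: (erefl (- a / (2 * b + 1 - a))); move: {2}(- a / _) => s sE.
have hs : 0 < s by rewrite -sE divr_gt0 // oppr_gt0.
have hs1 : s <= 1.
  rewrite -sE ler_pdivrMr // mul1r -{1}(add0r (-a)) lerD2r.
  by rewrite addr_ge0 // mulr_ge0.
have := H s hs hs1.
have -> : s * a + s ^+ 2 * b = s * (a + s * b) by ring.
rewrite pmulr_rge0 //.
have : (a + s * b) * (2 * b + 1 - a) = a * (b + 1 - a).
  by rewrite -sE; field; rewrite gt_eqF.
have : a * (b + 1 - a) < 0 by rewrite pmulr_llt0.
move=> h1 h2 h3.
have : (a + s * b) * (2 * b + 1 - a) >= 0 by rewrite mulr_ge0 // ltW.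
lra.
Qed.

Section D.
Variable R : rcfType.
Variables (l n : nat) (X : 'M[R]_(l, n)) (y : 'cV[R]_l).

Lemma XT_lin (t d : 'cV[R]_l) (s : R) : X^T *m (t + s *: d) = X^T *m t + s *: (X^T *m d).
Proof. by rewrite mulmxDr scalemxAr. Qed.

Lemma dual_exp C (t d : 'cV[R]_l) s :
  dual_obj X y C (t + s *: d) = dual_obj X y C t
    + s * (C * dotv (X^T *m t) (X^T *m d) - dotv y d)
    + s ^+ 2 * (C / 2 * dotv (X^T *m d) (X^T *m d)).
Proof.
rewrite /dual_obj !normv_sqr XT_lin !dotvDl !dotvDr !dotvZl !dotvZr (dotvC (X^T *m d)).
by field.
Qed.

Lemma VI C (t t' : 'cV[R]_l) : 0 <= C -> dual_opt X y C t -> in_box t' ->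
  0 <= C * dotv (X^T *m t) (X^T *m (t' - t)) - dotv y (t' - t).
Proof.
move=> hC [hb hopt] hb'.
apply: (small (b := C / 2 * dotv (X^T *m (t' - t)) (X^T *m (t' - t)))).
  by rewrite mulr_ge0 ?dotv_ge0 // divr_ge0.
move=> s hs hs1.
have : in_box (t + s *: (t' - t)).
  move=> j; rewrite !mxE.
  have := hb j; have := hb' j => /andP [h1 h2] /andP [h3 h4].
  have p1 : 0 <= (1 - s) * (t j 0 + 1) by rewrite mulr_ge0 //; lra.
  have p2 : 0 <= s * (t' j 0 + 1) by rewrite mulr_ge0 //; lra.
  have p3 : 0 <= (1 - s) * (1 - t j 0) by rewrite mulr_ge0 //; lra.
  have p4 : 0 <= s * (1 - t' j 0) by rewrite mulr_ge0 //; lra.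
  apply/andP; split; nra.
move=> /hopt; rewrite dual_exp; lra.
Qed.
End D.

Section M.
Variable R : rcfType.
Variables (l n : nat) (X : 'M[R]_(l, n)) (y : 'cV[R]_l).

Lemma rowvecE i : rowvec X i = X^T *m delta_mx i 0.
Proof. by rewrite /rowvec tr_row colE. Qed.

Lemma dotv_delta (v : 'cV[R]_l) i c : dotv v (c *: delta_mx i 0) = c * v i 0.
Proof.
rewrite /dotv (bigD1 i) //= big1 ?addr0 => [|j hj].
  by rewrite !mxE !eqxx /= mulr1 mulrC.
by rewrite !mxE (negbTE hj) /= mulr0 mulr0.
Qed.

Lemma coordVI C (t : 'cV[R]_l) i c : 0 <= C -> dual_opt X y C t ->
  in_box (t + c *: delta_mx i 0) ->
  0 <= c * (C * dotv (X^T *m t) (rowvec X i) - y i 0).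
Proof.
move=> hC ho hb; have := VI hC ho hb.
have -> : t + c *: delta_mx i 0 - t = c *: delta_mx i 0.
  by rewrite addrAC subrr add0r.
rewrite dotv_delta -scalemxAr -rowvecE dotvZr.
have -> : c * (C * dotv (X^T *m t) (rowvec X i) - y i 0) =
  C * (c * dotv (X^T *m t) (rowvec X i)) - c * y i 0 by ring.
by [].
Qed.

Lemma box_set (t : 'cV[R]_l) i (v : R) : in_box t -> -1 <= v <= 1 ->
  in_box (t + (v - t i 0) *: delta_mx i 0).
Proof.
move=> hb hv j; rewrite !mxE.
case: (eqVneq j i) => [->|hj]; last by rewrite /= mulr0 addr0.
by rewrite /= mulr1 addrC subrK.
Qed.
End M.

Lemma Cpos (R : rcfType) (C : nat -> R) K (hC0 : 0 < C 1%N)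
  (hCinc : forall j, (1 <= j)%N -> (j < K)%N -> C j < C j.+1) :
  forall j, (1 <= j)%N -> (j <= K)%N -> 0 < C j.
Proof.
elim=> [//|j IH] hj hjK.
case: (ltnP 0 j) => hj0; last by move: hj0; rewrite leqn0 => /eqP ->.
apply: lt_trans (IH hj0 (ltnW hjK)) (hCinc j hj0 hjK).
Qed.

Theorem corollary5 (R : rcfType) (l n : nat) (X : 'M[R]_(l, n)) (y : 'cV[R]_l)
  (C : nat -> R) (K k : nat)
  (hC0 : 0 < C 1%N)
  (hCinc : forall j, (1 <= j)%N -> (j < K)%N -> C j < C j.+1)
  (hk : (1 <= k < K)%N)
  (thk thk1 : 'cV[R]_l)
  (hthk : dual_opt X y (C k) thk)
  (hthk1 : dual_opt X y (C k.+1) thk1) :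
  forall i : 'I_l,
    ((C k.+1 + C k) / 2 * dotv (X^T *m thk) (rowvec X i)
       - (C k.+1 - C k) / 2 * normv (X^T *m thk) * normv (rowvec X i) > y i 0 ->
     thk1 i 0 = -1)
  /\
    ((C k.+1 + C k) / 2 * dotv (X^T *m thk) (rowvec X i)
       + (C k.+1 - C k) / 2 * normv (X^T *m thk) * normv (rowvec X i) < y i 0 ->
     thk1 i 0 = 1).
Proof.
move=> i.
case/andP: hk => hk1 hkK.
have hC0k : 0 < C k by apply: (Cpos hC0 hCinc) => //; exact: ltnW.
have hlt : C k < C k.+1 by apply: hCinc.
have VI1 := VI (ltW hC0k) hthk hthk1.1.
have VI2 := VI (ltW (lt_trans hC0k hlt)) hthk1 hthk.1.
rewrite !mulmxBr !dotvDr !dotvNr in VI1 VI2.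
move: VI1 VI2.
set u0 := X^T *m thk; set u1 := X^T *m thk1.
set c0 := C k; set c1 := C k.+1.
rewrite (dotvC u1 u0) => VI1 VI2.
set p := dotv u0 u0; set q := dotv u0 u1; set r := dotv u1 u1.
have hsum : 0 <= (c0 + c1) * q - c0 * p - c1 * r.
  have -> : (c0 + c1) * q - c0 * p - c1 * r =
    (c0 * (dotv u0 u1 - dotv u0 u0) - (dotv y thk1 - dotv y thk)) +
    (c1 * (dotv u0 u1 - dotv u1 u1) - (dotv y thk - dotv y thk1)) by rewrite /p /q /r; ring.
  exact: addr_ge0.
have hc1 : 0 <= c1 by exact: (ltW (lt_trans hC0k hlt)).
set mm := (c1 + c0) / 2; set h := (c1 - c0) / 2.
have hh : 0 <= h by rewrite /h divr_ge0 // subr_ge0 ltW.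
set d := c1 *: u1 - mm *: u0.
have Edd : dotv d d = h ^+ 2 * p - c1 * ((c0 + c1) * q - c0 * p - c1 * r).
  rewrite /d !dotvDl !dotvDr !dotvNl !dotvNr !dotvZl !dotvZr (dotvC u1 u0) -/p -/q -/r.
  by rewrite /mm /h; field.
have hdd : dotv d d <= h ^+ 2 * p.
  rewrite Edd lerBlDr lerDl; exact: mulr_ge0.
have hnd : normv d <= h * normv u0.
  rewrite /normv -(ger0_norm hh) -sqrtr_sqr -sqrtrM ?sqr_ge0 //.
  by rewrite ler_sqrt // mulr_ge0 ?sqr_ge0 // dotv_ge0.
set x := rowvec X i.
have Ew : c1 * dotv u1 x = mm * dotv u0 x + dotv d x.
  by rewrite /d dotvDl dotvNl !dotvZl; ring.
have hcs : `|dotv d x| <= h * normv u0 * normv x.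
  apply: le_trans (CS d x) _; apply: ler_wpM2r; last exact: hnd.
  by rewrite /normv sqrtr_ge0.
have /andP [hl hr] : - (h * normv u0 * normv x) <= dotv d x <= h * normv u0 * normv x
  by rewrite -ler_norml.
have hb1 := hthk1.1 i; case/andP: hb1 => hb1 hb2.
have h11 : -1 <= (1 : R) by apply: le_trans (lerN10 _) ler01.
have hm1 : -1 <= (-1 : R) <= 1 by rewrite lexx h11.
have hp1 : -1 <= (1 : R) <= 1 by rewrite lexx h11.
split => H.
- have hv := coordVI hc1 hthk1 (@box_set _ _ thk1 i (-1) hthk1.1 hm1).
  have hg : 0 < c1 * dotv u1 x - y i 0.
    rewrite Ew subr_gt0; apply: lt_le_trans H _.
    by rewrite lerD2l.
  rewrite pmulr_lge0 // subr_ge0 in hv.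
  by apply/eqP; rewrite eq_le hb1 hv.
- have hv := coordVI hc1 hthk1 (@box_set _ _ thk1 i 1 hthk1.1 hp1).
  have hg : c1 * dotv u1 x - y i 0 < 0.
    rewrite Ew subr_lt0; apply: le_lt_trans H.
    by rewrite lerD2l.
  rewrite nmulr_lge0 // subr_le0 in hv.
  by apply/eqP; rewrite eq_le hb2 hv.
Qed.
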